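(* Let $k\ge 5$ and $k<n\le k+2$. Then there is no antipodal $k$-splitting of $Q_2^n$.
   Context: $Q_2^n=\{0,1\}^n$. For $0\le m\le n$, an $m$-face of $Q_2^n$ is given by a tuple $a=(a_1,\dots,a_n)\in\{0,1,*\}^n$ with exactly $m$ entries equal to $*$; it denotes the set $\{x\in Q_2^n : x_i=a_i \text{ whenever } a_i\in\{0,1\}\}$. The direction of a face is the set of positions of its asterisks; two faces are parallel if they have the same direction, and two parallel faces $a,b$ are antipodal if $b_i=1-a_i$ at every non-asterisk position $i$. An antipodal $k$-splitting of $Q_2^n$ is a collection of exactly $2^k$ $(n-k)$-faces whose union is $Q_2^n$ and which contains no pair of parallel non-antipodal faces. *)

(* Defs.v *)
From mathcomp Require Import all_boot.
Set Implicit Arguments. Unset Strict Implicit. Unset Printing Implicit Defensive.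

Definition vertex (n : nat) := {ffun 'I_n -> bool}.
(* A face of Q_2^n: None encodes the asterisk '*', Some b a fixed coordinate b. *)
Definition face (n : nat) := {ffun 'I_n -> option bool}.

Definition direction n (a : face n) : {set 'I_n} := [set i | a i == None].

Definition is_mface n (m : nat) (a : face n) : bool := #|direction a| == m.

Definition in_face n (x : vertex n) (a : face n) : bool :=
  [forall i, if a i is Some b then x i == b else true].

Definition parallel n (a b : face n) : bool := direction a == direction b.

Definition antipodal n (a b : face n) : bool :=
  parallel a b &&
  [forall i, if a i is Some c then b i == Some (~~ c) else true].

Definition antipodal_splitting n (k : nat) (F : {set face n}) : Prop :=
  [/\ #|F| = 2 ^ k,
      (forall a, a \in F -> is_mface (n - k) a),
      (forall x : vertex n, exists2 a, a \in F & in_face x a) &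
      (forall a b, a \in F -> b \in F -> a != b -> parallel a b -> antipodal a b)].

(* Main.v *)
Require Import Defs.
From mathcomp Require Import all_boot all_algebra zify.
Set Implicit Arguments. Unset Strict Implicit. Unset Printing Implicit Defensive.
Import GRing.Theory Num.Theory.

Lemma card_face n (a : face n) :
  #|[set x : vertex n | in_face x a]| = 2 ^ #|direction a|.
Proof.
pose Fm := fun (i : 'I_n) (y : bool) => if a i is Some b then y == b else true.
have -> : #|[set x : vertex n | in_face x a]| = #|(family Fm : simpl_pred (vertex n))|.
  apply: eq_card => x; rewrite inE /in_face; apply/forallP/familyP => H i;
    by move: (H i); rewrite /Fm; case: (a i).
rewrite card_family.
rewrite foldrE big_image /=.
rewrite (bigID (fun i => i \in direction a)) /=.
rewrite (eq_bigr (fun _ => 2)); last first.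
  by move=> i; rewrite /Fm inE; move/eqP->; rewrite card_bool.
rewrite [X in _ * X]big1; last first.
  move=> i; rewrite /Fm inE; case: (a i) => // b _; exact: card1.
by rewrite muln1 prod_nat_const.
Qed.


Lemma bip (e : 'I_7 -> 'I_7 -> bool) :
  (forall p q r, p != q -> p != r -> q != r -> e p q (+) e p r (+) e q r = false) ->
  #|[set x : 'I_7 * 'I_7 | (x.1 < x.2) && e x.1 x.2]| <= 12.
Proof.
move=> tri.
pose xv v := (v != ord0) && e ord0 v.
pose Q := [set x : 'I_7 * 'I_7 | (x.1 < x.2) && (xv x.1 != xv x.2)].
have sub : [set x : 'I_7 * 'I_7 | (x.1 < x.2) && e x.1 x.2] \subset Q.
  apply/subsetP => [[p1 p2]]; rewrite !inE /= => /andP [lt ep]; rewrite lt /=.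
  have p20 : p2 != ord0 by apply/eqP => E; move: lt; rewrite E.
  rewrite /xv p20 /=.
  case: (eqVneq p1 ord0) => [E|p10] /=; first by move: ep; rewrite E => ->.
  have p12 : p1 != p2 by rewrite -val_eqE /= neq_ltn lt.
  have := tri ord0 p1 p2; rewrite eq_sym p10 (eq_sym ord0 p2) p20 p12 => /(_ isT isT isT).
  by rewrite ep; case: (e ord0 p1); case: (e ord0 p2).
pose A := [set v | xv v].
pose h (x : 'I_7 * 'I_7) := if xv x.1 then x else (x.2, x.1).
have hinj : {in Q &, injective h}.
  move=> [a1 a2] [b1 b2]; rewrite !inE /h /= => /andP [la na] /andP [lb nb].
  case: (xv a1) na; case: (xv b1) nb => //=.
  - case: (xv b2) => //; case: (xv a2) => // _ _ [E1 E2]; subst; move: la lb; lia.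
  - case: (xv b2) => //; case: (xv a2) => // _ _ [E1 E2]; subst; move: la lb; lia.
  - by case: (xv b2) => //; case: (xv a2) => // _ _ [-> ->].
have subX : h @: Q \subset setX A (~: A).
  apply/subsetP => y /imsetP [[a1 a2] aQ ->]; move: aQ; rewrite !inE /h /=.
  by case E1: (xv a1); case E2: (xv a2); rewrite /= ?E1 ?E2 ?andbF.
have := subset_leq_card sub; have := subset_leq_card subX.
rewrite (card_in_imset hinj) cardsX.
have := cardsC A; rewrite card_ord.
move: #|A| #|~: A| => a b ab H1 H2.
have aux : forall c, c <= 7 -> c * (7 - c) <= 12.
  by case => [|[|[|[|[|[|[|[|]]]]]]]].
have E : b = 7 - a by lia.
rewrite E in H1.
have := aux a; lia.
Qed.

Lemma pow_A j : 5 <= j -> 2*j+4 < 2^j.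
Proof.
elim: j => // j IH h; case: (eqVneq j 4) => [->//|ne].
have /IH : 5 <= j by lia.
rewrite expnS; lia.
Qed.
Lemma pow_C j : 6 <= j -> (j+2)*(j+1) < 2^j.
Proof.
elim: j => // j IH h; case: (eqVneq j 5) => [->//|ne].
have h' : 6 <= j by lia.
have := @pow_A j (ltnW h'); move: (IH h'); rewrite expnS; nia.
Qed.
Lemma bin2_le j : 2 * 'C(j, 2) <= j * (j - 1).
Proof. rewrite bin2 -divn2. have := leq_trunc_div (j * j.-1) 2. rewrite -subn1. lia. Qed.

Section S.
Variable n : nat.

Definition flip (i : 'I_n) (x : vertex n) : vertex n :=
  [ffun j => if j == i then ~~ x j else x j].

Lemma flipK i : involutive (flip i).
Proof. by move=> x; apply/ffunP=> j; rewrite !ffunE; case: eqP => // _; rewrite negbK. Qed.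

Local Open Scope ring_scope.

Definition sgn (T : {set 'I_n}) (x : vertex n) : int := (-1) ^+ #|[set j in T | x j]|.

Lemma sgn_flip (T : {set 'I_n}) i x : i \in T -> sgn T (flip i x) = - sgn T x.
Proof.
move=> iT; rewrite /sgn.
rewrite (cardsD1 i [set j in T | flip i x j]) (cardsD1 i [set j in T | x j]).
have -> : [set j in T | flip i x j] :\ i = [set j in T | x j] :\ i.
  by apply/setP=> j; rewrite !inE ffunE; case: eqP.
rewrite !inE iT ffunE eqxx /=.
by case: (x i); rewrite /= !exprS ?expr0 ?mulNr ?opprK ?mul1r.
Qed.

Lemma sum_sgn_flip (T : {set 'I_n}) i (P : pred (vertex n)) : i \in T ->
  (forall x, P (flip i x) = P x) -> \sum_(x | P x) sgn T x = 0.
Proof.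
move=> iT HP.
have E : \sum_(x | P x) sgn T x = \sum_(x | P (flip i x)) sgn T (flip i x).
  by apply: reindex_inj; apply: can_inj (flipK i).
have : \sum_(x | P x) sgn T x = - \sum_(x | P x) sgn T x.
  rewrite {1}E -sumrN; apply: eq_big => x; first by rewrite HP.
  by move=> _; rewrite sgn_flip.
by move: (\sum_(x | P x) sgn T x) => s; lia.
Qed.

Definition sgnf (T : {set 'I_n}) (a : face n) : int :=
  (-1) ^+ #|[set j in T | a j == Some true]|.

Lemma sum_face (T : {set 'I_n}) (a : face n) :
  \sum_(x | in_face x a) sgn T x =
  if T :&: direction a == set0 then (2 ^ #|direction a|)%N%:R * sgnf T a else 0.
Proof.
case: ifP => H.
  rewrite (eq_bigr (fun _ => sgnf T a)); last first.
    move=> x /forallP Hx; rewrite /sgn /sgnf.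
    suff -> : [set j in T | x j] = [set j in T | a j == Some true] by [].
    apply/setP=> j; rewrite !inE; case jT: (j \in T) => //=.
    move: (Hx j); case E: (a j) => [b|].
      by move/eqP=> ->; case: (b).
    have: j \in T :&: direction a by rewrite in_setI jT /direction inE E.
    by rewrite (eqP H) inE.
  rewrite sumr_const -card_face.
  rewrite (_ : #|[pred x | in_face x a]| = #|[set x | in_face x a]|); last first.
    by apply: eq_card => x; rewrite inE.
  by rewrite mulr_natl.
move/set0Pn: H => [i]; rewrite !inE => /andP[iT ia].
apply: (sum_sgn_flip iT) => x.
apply: eq_forallb => j; rewrite ffunE; case: eqP => // ->.
by rewrite (eqP ia).
Qed.


Lemma sum_eq1 (I : finType) (f : I -> nat) :
  (forall x, 0 < f x)%N -> (\sum_x f x = #|I|)%N -> forall x, f x = 1%N.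
Proof.
move=> Hp Hs x.
have : (\sum_x (f x - 1) = 0)%N.
  apply/eqP; rewrite -(eqn_add2r #|I|) add0n -{2}Hs -sum1_card -big_split /=.
  by apply/eqP/eq_bigr => y _; rewrite subnK.
move/eqP; rewrite sum_nat_eq0 => /forallP/(_ x)/implyP/(_ isT)/eqP.
by move: (Hp x); lia.
Qed.

Lemma exact_one (k : nat) (F : {set face n}) : (k <= n)%N -> antipodal_splitting k F ->
  forall x, #|[set a in F | in_face x a]| = 1%N.
Proof.
move=> kn [cF dF covF _].
apply: sum_eq1.
  move=> x; case: (covF x) => a aF xa; apply/card_gt0P; exists a; by rewrite inE aF.
rewrite card_ffun card_bool card_ord.
rewrite (eq_bigr (fun x => \sum_(a in F) (in_face x a : nat))%N); last first.
  move=> x _; rewrite -sum1_card big_mkcond [RHS]big_mkcond /=.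
  by apply: eq_bigr => a _; rewrite inE; case: (a \in F).
rewrite exchange_big /=.
rewrite (eq_bigr (fun a => 2 ^ (n - k)))%N; last first.
  move=> a aF; rewrite -(eqP (dF a aF)) -card_face -sum1_card [RHS]big_mkcond /=.
  by apply: eq_bigr => x _; rewrite inE; case: (in_face x a).
by rewrite sum_nat_const cF -expnD subnKC.
Qed.

Lemma fourier (m : nat) (F : {set face n}) (T : {set 'I_n}) :
  (forall x, #|[set a in F | in_face x a]| = 1%N) ->
  (forall a, a \in F -> #|direction a| = m) -> T != set0 ->
  \sum_(a in F | T :&: direction a == set0) sgnf T a = 0.
Proof.
move=> H1 Hm /set0Pn [i iT].
have H0 : \sum_x sgn T x = 0 by apply: (sum_sgn_flip (P := predT) iT).
rewrite (eq_bigr (fun x => \sum_(a in F) (if in_face x a then sgn T x else 0))) in H0; last first.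
  move=> x _; rewrite -big_mkcondr /=.
  rewrite (eq_bigl (fun a => a \in [set a in F | in_face x a])); last by move=> a; rewrite inE.
  by rewrite sumr_const H1.
rewrite exchange_big /= in H0.
rewrite (eq_bigr (fun a => if T :&: direction a == set0 then (2 ^ m)%N%:R * sgnf T a else 0)) in H0; last first.
  by move=> a aF; rewrite -big_mkcond /= sum_face Hm.
rewrite -big_mkcondr /= -mulr_sumr in H0.
move: H0 => /eqP; rewrite mulf_eq0 => /orP [|/eqP] //. by rewrite pnatr_eq0 expn_eq0.
Qed.


Definition anti (a : face n) : face n :=
  [ffun i => if a i is Some c then Some (~~ c) else None].

Definition cls (F : {set face n}) (d : {set 'I_n}) := [set a in F | direction a == d].

Lemma clsP F d a : a \in cls F d -> a \in F /\ direction a = d.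
Proof. by rewrite inE => /andP[aF /eqP]. Qed.

Lemma antipodal_anti (a b : face n) : antipodal a b -> b = anti a.
Proof.
case/andP=> /eqP par /forallP H; apply/ffunP=> i; rewrite ffunE.
move: (H i); case E: (a i) => [c|]; first by move/eqP.
move=> _; have : i \in direction a by rewrite /direction inE E.
by rewrite par /direction inE => /eqP.
Qed.

Lemma cls_sub k F d a0 : antipodal_splitting k F -> a0 \in cls F d ->
  cls F d \subset [set a0; anti a0].
Proof.
move=> [_ _ _ antF] /clsP [a0F da0]; apply/subsetP => b /clsP [bF db].
case: (eqVneq a0 b) => [<-|ne]; first by rewrite !inE eqxx.
rewrite (antipodal_anti (antF _ _ a0F bF ne _)); last by rewrite /parallel da0 db.
by rewrite !inE eqxx orbT.
Qed.

Lemma cls_le2 k F d : antipodal_splitting k F -> (#|cls F d| <= 2)%N.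
Proof.
move=> HF; case: (set_0Vmem (cls F d)) => [->|[a0 a0c]]; first by rewrite cards0.
apply: leq_trans (subset_leq_card (cls_sub HF a0c)) _.
by rewrite cards2; case: (_ != _).
Qed.

Lemma count_cls (F : {set face n}) : #|F| = (\sum_(d : {set 'I_n}) #|cls F d|)%N.
Proof.
rewrite -sum1_card (partition_big (fun a => direction a) predT) //=.
apply: eq_bigr => d _; rewrite -sum1_card; apply: eq_bigl => a; by rewrite inE.
Qed.

Lemma sum_le2 (F : {set face n}) (k : nat) (good : pred {set 'I_n}) :
  antipodal_splitting k F -> (forall d, cls F d != set0 -> good d) ->
  (#|F| <= 2 * #|good|)%N.
Proof.
move=> HF Hg; rewrite count_cls.
apply: (@leq_trans (\sum_(d : {set 'I_n}) (if good d then 2 else 0))%N).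
  apply: leq_sum => d _; case: ifP => gd; first exact: (cls_le2 d HF).
  by case: (eqVneq (cls F d) set0) => [->|/Hg]; [rewrite cards0 | rewrite gd].
by rewrite -big_mkcond /= sum_nat_const mulnC.
Qed.

Lemma count_bound k (F : {set face n}) : antipodal_splitting k F -> (2 ^ k <= 2 * 'C(n, n - k))%N.
Proof.
move=> HF; have [cF dF _ _] := HF.
rewrite -cF; have := card_draws 'I_n (n - k)%N; rewrite card_ord => <-.
apply: (sum_le2 HF) => d /set0Pn [a /clsP [aF <-]].
change (direction a \in [set A : {set 'I_n} | #|A| == (n - k)%N]); rewrite inE; exact: dF.
Qed.


Lemma sgnf_pm (T : {set 'I_n}) a : sgnf T a = 1 \/ sgnf T a = -1.
Proof. by rewrite /sgnf -signr_odd; case: odd; [right|left]. Qed.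

Lemma dir_sub_eq (T d X : {set 'I_n}) : T = ~: d -> #|X| = #|d| ->
  (T :&: X == set0) = (X == d).
Proof.
move=> -> cX; rewrite setIC setI_eq0 disjoints_subset setCK eqEcard cX leqnn andbT //.
Qed.

Lemma cls_full k (F : {set face n}) (d : {set 'I_n}) : (0 < k)%N -> (k <= n)%N -> antipodal_splitting k F ->
  #|d| = (n - k)%N -> cls F d != set0 -> #|cls F d| = 2%N.
Proof.
move=> k0 kn HF cd ne.
have H1 := exact_one kn HF.
have [_ dF _ _] := HF.
have Hm : forall a, a \in F -> #|direction a| = (n - k)%N by move=> a /dF /eqP.
have T0 : ~: d != set0.
  apply/negP => /eqP E; move: (cardsC d); rewrite E cards0 addn0 card_ord cd; lia.
have := fourier H1 Hm T0.
rewrite (eq_bigl (fun a => a \in cls F d)); last first.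
  move=> a; rewrite inE; case aF: (a \in F) => //=.
  by apply: dir_sub_eq; rewrite // Hm // cd.
have := cls_le2 d HF; move: ne; rewrite -card_gt0.
case E: #|cls F d| => [|[|[|]]] // _ _.
move/eqP: E => /cards1P [a0 ->]; rewrite big_set1.
by case: (sgnf_pm (~: d) a0) => ->.
Qed.

Lemma sgnf_anti (T : {set 'I_n}) a : T :&: direction a == set0 ->
  sgnf T a * sgnf T (anti a) = (-1) ^+ #|T|.
Proof.
move=> H; rewrite /sgnf -exprD.
have -> : [set j in T | anti a j == Some true] = T :\: [set j in T | a j == Some true].
  apply/setP => j; rewrite !inE ffunE; case jT: (j \in T) => //=.
  case E: (a j) => [c|].
    by case: (c).
  have: j \in T :&: direction a by rewrite in_setI jT /direction inE E.
  by rewrite (eqP H) inE.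
have := cardsID [set j in T | a j == Some true] T.
have -> : T :&: [set j in T | a j == Some true] = [set j in T | a j == Some true].
  by apply/setP => j; rewrite !inE; case: (j \in T).
by move=> ->.
Qed.

Lemma cls_sum k (F : {set face n}) (d : {set 'I_n}) (T : {set 'I_n}) : antipodal_splitting k F ->
  #|cls F d| = 2%N -> T :&: d == set0 -> ~~ odd #|T| ->
  \sum_(a in cls F d) sgnf T a = 2 \/ \sum_(a in cls F d) sgnf T a = -2.
Proof.
move=> HF c2 Td ev.
have /card_gt0P [a0 a0c] : (0 < #|cls F d|)%N by rewrite c2.
have sub := cls_sub HF a0c.
have E : cls F d = [set a0; anti a0].
  apply/eqP; rewrite eqEcard sub c2 cards2; by case: (_ != _).
have ne : a0 != anti a0 by move: c2; rewrite E cards2; case: (_ != _).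
have [_ da0] := clsP a0c.
have := sgnf_anti (a := a0) (T := T); rewrite da0 => /(_ Td).
rewrite -signr_odd (negbTE ev) expr0.
rewrite E big_setU1 /= ?big_set1; last by rewrite inE.
by case: (sgnf_pm T a0) => ->; case: (sgnf_pm T (anti a0)) => ->; rewrite /=; lia.
Qed.

End S.

Section Seven.
Local Open Scope ring_scope.

Definition used (F : {set face 7}) (u v : 'I_7) := cls F [set u; v] != set0.

Lemma sumU7 (A B : {set face 7}) (g : face 7 -> int) : [disjoint A & B] ->
  \sum_(a in A :|: B) g a = \sum_(a in A) g a + \sum_(a in B) g a.
Proof. by move=> dAB; rewrite -bigU //; apply: eq_bigl => a; rewrite !inE. Qed.

Lemma tval (F : {set face 7}) (U d : {set 'I_7}) : antipodal_splitting 5 F ->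
  d \subset U -> #|d| = 2%N -> #|~: U| = 4%N ->
  (cls F d != set0 -> \sum_(a in cls F d) sgnf (~: U) a = 2 \/ \sum_(a in cls F d) sgnf (~: U) a = -2)
  /\ (cls F d = set0 -> \sum_(a in cls F d) sgnf (~: U) a = 0).
Proof.
move=> HF dU cd cT; split; last by move=> ->; rewrite big_set0.
move=> ne.
have c2 := cls_full (isT : (0 < 5)%N) (isT : (5 <= 7)%N) HF cd ne.
apply: (cls_sum HF c2); last by rewrite cT.
by rewrite setI_eq0 disjoint_sym disjoints_subset setCK.
Qed.

Lemma triangle (F : {set face 7}) : antipodal_splitting 5 F ->
  forall p q r, p != q -> p != r -> q != r ->
  used F p q (+) used F p r (+) used F q r = false.
Proof.
move=> HF p q r pq pr qr.
have [_ dF _ _] := HF.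
have Hm : forall a, a \in F -> #|direction a| = 2%N by move=> a /dF /eqP.
have H1 := exact_one (isT : (5 <= 7)%N) HF.
pose U := [set p; q; r].
have qp : q != p by rewrite eq_sym.
have rp : r != p by rewrite eq_sym.
have rq : r != q by rewrite eq_sym.
have cU : #|U| = 3%N.
  by rewrite /U setUC cardsU1 cards2 pq !inE negb_or rp rq.
have cT : #|~: U| = 4%N by have := cardsC U; rewrite card_ord cU; lia.
have T0 : ~: U != set0 by rewrite -card_gt0 cT.
have := fourier H1 Hm T0.
have n1 : [set p; q] != [set p; r].
  by apply/negP => /eqP/setP/(_ q); rewrite !inE eqxx orbT (negbTE qp) (negbTE qr).
have n2 : [set p; q] != [set q; r].
  by apply/negP => /eqP/setP/(_ p); rewrite !inE eqxx /= (negbTE pq) (negbTE pr).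
have n3 : [set p; r] != [set q; r].
  by apply/negP => /eqP/setP/(_ p); rewrite !inE eqxx /= (negbTE pq) (negbTE pr).
have memE : forall a, (a \in F) && (~: U :&: direction a == set0) =
    (a \in cls F [set p; q] :|: cls F [set p; r] :|: cls F [set q; r]).
  move=> a; case aF: (a \in F); last by rewrite !inE aF.
  rewrite !inE aF /= setI_eq0 disjoint_sym disjoints_subset setCK.
  apply/idP/idP.
    move=> sub; have /cards2P [u [v [uv E]]] : #|direction a| == 2%N by rewrite Hm.
    rewrite E in sub *.
    have uU : u \in U by apply: (subsetP sub); rewrite !inE eqxx.
    have vU : v \in U by apply: (subsetP sub); rewrite !inE eqxx orbT.
    move: uU vU uv; rewrite !inE -!orbA.
    case/ssrbool.or3P=> /eqP ->; case/ssrbool.or3P=> /eqP -> uv; rewrite ?eqxx ?orbT //;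
      rewrite ?eqxx in uv; rewrite // setUC ?eqxx ?orbT //.
  rewrite -!orbA; case/ssrbool.or3P=> /eqP ->; apply/subsetP => x; rewrite !inE;
    by case/orP=> ->; rewrite ?orbT.
rewrite (eq_bigl _ _ memE).
rewrite sumU7; last first.
  rewrite -setI_eq0; apply/eqP/setP => a; rewrite !inE.
  case: (direction a == [set q; r]) /eqP => [->|_]; last by rewrite !andbF.
  by rewrite ![[set q; r] == _]eq_sym (negbTE n2) (negbTE n3) !andbF.
rewrite sumU7; last first.
  rewrite -setI_eq0; apply/eqP/setP => a; rewrite !inE.
  case: (direction a == [set p; r]) /eqP => [->|_]; last by rewrite !andbF.
  by rewrite ![[set p; r] == _]eq_sym (negbTE n1) !andbF.
have sub1 : [set p; q] \subset U by apply/subsetP => x; rewrite !inE; case/orP => ->; rewrite ?orbT.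
have sub2 : [set p; r] \subset U by apply/subsetP => x; rewrite !inE; case/orP => ->; rewrite ?orbT.
have sub3 : [set q; r] \subset U by apply/subsetP => x; rewrite !inE; case/orP => ->; rewrite ?orbT.
have [t1 t1'] := tval HF sub1 (ltac:(by rewrite cards2 pq) : #|[set p; q]| = 2%N) cT.
have [t2 t2'] := tval HF sub2 (ltac:(by rewrite cards2 pr) : #|[set p; r]| = 2%N) cT.
have [t3 t3'] := tval HF sub3 (ltac:(by rewrite cards2 qr) : #|[set q; r]| = 2%N) cT.
rewrite /used.
move: t1 t1' t2 t2' t3 t3'.
move: (\sum_(a in cls F [set p; q]) sgnf (~: U) a) => s1.
move: (\sum_(a in cls F [set p; r]) sgnf (~: U) a) => s2.
move: (\sum_(a in cls F [set q; r]) sgnf (~: U) a) => s3.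
case: (eqVneq (cls F [set p; q]) set0) => [E1|E1];
case: (eqVneq (cls F [set p; r]) set0) => [E2|E2];
case: (eqVneq (cls F [set q; r]) set0) => [E3|E3] => t1 t1' t2 t2' t3 t3' /=.
all: try (move/(_ E1): t1' => t1'); try (move/(_ isT): t1 => t1).
all: try (move/(_ E2): t2' => t2'); try (move/(_ isT): t2 => t2).
all: try (move/(_ E3): t3' => t3'); try (move/(_ isT): t3 => t3).
all: move=> S; clear -S t1 t1' t2 t2' t3 t3'; lia.
Qed.


End Seven.

Lemma seven_false (F : {set face 7}) : ~ antipodal_splitting 5 F.
Proof.
move=> HF.
have tri := triangle HF.
have [cF _ _ _] := HF.
have H1 := sum_le2 (good := fun d => cls F d != set0) HF (fun d h => h).
pose P := [set x : 'I_7 * 'I_7 | (x.1 < x.2)%N && used F x.1 x.2].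
have H2 : (#|(fun d => cls F d != set0) : pred {set 'I_7}| <= #|P|)%N.
  apply: leq_trans (leq_imset_card (fun x => [set x.1; x.2]) P).
  apply: subset_leq_card; apply/subsetP => d ne0; have ne : cls F d != set0 := ne0.
  have /set0Pn [a /clsP [aF da]] := ne.
  have [_ dF _ _] := HF.
  have /cards2P [u [v [uv E]]] : #|d| == 2%N by rewrite -da; exact: dF.
  apply/imsetP; case: (ltngtP u v) => [lt|lt|eq].
  - exists (u, v) => //; rewrite inE /= lt /used -E ne //.
  - exists (v, u); last by rewrite E setUC.
    by rewrite inE /= lt /used setUC -E ne.
  - by move: uv; rewrite (ord_inj eq) eqxx.
have H3 := bip tri.
move: H1 H2 H3; rewrite cF -/P; lia.
Qed.

Unset Implicit Arguments.
Theorem proposition17 (k n : nat) :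
  5 <= k -> k < n -> n <= k + 2 ->
  ~ (exists F : {set face n}, antipodal_splitting k F).
Proof.
move=> k5 kn nk [F HF].
have B := count_bound HF.
case: (eqVneq n k.+1) => [En | ne1].
  subst n; move: B; rewrite (_ : (k.+1 - k = 1)%N); last by lia.
  rewrite bin1 => B; have := pow_A k5; lia.
have En : n = k.+2 by lia.
subst n; move: B; rewrite (_ : (k.+2 - k = 2)%N); last by lia.
move=> B; have := bin2_le k.+2.
case: (eqVneq k 5) => [E|ne5].
  by subst k; move: F HF {B} => F /seven_false.
have k6 : (6 <= k)%N by lia.
have := pow_C k6; move: B; rewrite (_ : (k.+2 - 1 = k + 1)%N); last by lia.
rewrite (_ : k.+2 = k + 2)%N; last by lia.
nia.
Qed.
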